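(* Let $P\subseteq\mathsf{Pos}(R)$, $\alpha\in\Sigma$, let $T$ be the transition tree of $P$, and let $v\in N^\odot(P,\alpha)$ be a node lying on a segment $s$ of $T$ with $v\neq\mathsf{top}(s)$ and $v\neq\mathsf{bot}(s)$. Then $\mathsf{left}(v)$ lies on $s$. Moreover, $v\in\tilde N^\odot(P,\alpha)$ unless either (a) $v$ is $\odot$-dominated by $\mathsf{top}(s)$, or (b) $\mathsf{first}(\mathsf{right}(v))\subseteq\mathsf{first}(\mathsf{top}(s))$ and $\mathsf{top}(s)$ is weakly $\odot$-dominated by some $\odot$-live node of $T$.
   Context: A regular expression $R$ over $\Sigma$ is identified with its parse tree; $\odot$-nodes $v$ have children $\mathsf{left}(v),\mathsf{right}(v)$. Positions are the character-labeled leaves, $\mathsf{Pos}_\alpha$ those labeled $\alpha$. $\mathsf{first}(v)$, $\mathsf{last}(v)$ are the sets of positions occurring first/last in a sequence of positions generated by the subexpression rooted at $v$; $\mathsf{firstextent}(p)=\{v:p\in\mathsf{first}(v)\}$, $\mathsf{lastextent}(p)=\{v:p\in\mathsf{last}(v)\}$, extended to sets by union. $N^\odot(P,\alpha)$ is the set of $\odot$-nodes $v$ with $\mathsf{left}(v)\in\mathsf{lastextent}(P)$ and $\mathsf{right}(v)\in\mathsf{firstextent}(\mathsf{Pos}_\alpha)$. A node $v$ is $\odot$-dominated by $u$ if $u$ is a proper ancestor of $v$ and $\mathsf{first}(\mathsf{right}(v))\subseteq\mathsf{first}(\mathsf{right}(u))$; $\tilde N^\odot(P,\alpha)$ is the set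 of $v\in N^\odot(P,\alpha)$ not $\odot$-dominated by any node of $N^\odot(P,\alpha)$. The transition tree $T$ of $P$ is the subtree induced by the nodes of $P$ and all their ancestors; a branching node of $T$ has two children in $T$; a segment of $T$ is a path from a leaf or branching node of $T$ up to the nearest branching node above it (or the root if none), with top node $\mathsf{top}(s)$ and bottom node $\mathsf{bot}(s)$. A node $v$ is $\odot$-live if it is a $\odot$-node with $\mathsf{left}(v)\in\mathsf{lastextent}(P)$. A node $v$ of $T$ is weakly $\odot$-dominated by $u$ if $u$ is $\odot$-live, $u$ is a proper ancestor of $v$, and $\mathsf{first}(v)\subseteq\mathsf{first}(\mathsf{right}(u))$. *)

(* Defs.v *)
From Stdlib Require Import List.
Import ListNotations.
Set Implicit Arguments.

Inductive re (A : Type) : Type :=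
| Empty : re A
| Eps : re A
| Chr : A -> re A
| Alt : re A -> re A -> re A
| Cat : re A -> re A -> re A        (* the concatenation operator, written (.) in the paper *)
| Star : re A -> re A.
Arguments Empty {A}. Arguments Eps {A}.

(* A node of the parse tree is identified by its address: the list of child
   directions read from the node UP to the root (false = left/only child,
   true = right child). *)
Definition addr := list bool.

Definition left (v : addr) : addr := false :: v.
Definition right (v : addr) : addr := true :: v.

Fixpoint subat A (R : re A) (p : addr) : option (re A) :=
  match p with
  | [] => Some R
  | b :: p' =>
    match subat R p' with
    | Some (Alt r1 r2) => Some (if b then r2 else r1)
    | Some (Cat r1 r2) => Some (if b then r2 else r1)
    | Some (Star r) => if b then None else Some r
    | _ => None
    end
  end.

Definition is_node A (R : re A) (v : addr) : Prop := subat R v <> None.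

Definition is_pos A (R : re A) (p : addr) : Prop :=
  exists a, subat R p = Some (Chr a).
Definition is_pos_of A (R : re A) (a : A) (p : addr) : Prop :=
  subat R p = Some (Chr a).

Definition is_cat A (R : re A) (v : addr) : Prop :=
  exists r1 r2, subat R v = Some (Cat r1 r2).

(* gen r p w : the sequence of positions w is generated by the subexpression r
   located at address p (positions are named by their addresses). *)
Inductive gen A : re A -> addr -> list addr -> Prop :=
| gen_eps p : gen Eps p []
| gen_chr a p : gen (Chr a) p [p]
| gen_altl r1 r2 p w : gen r1 (false :: p) w -> gen (Alt r1 r2) p w
| gen_altr r1 r2 p w : gen r2 (true :: p) w -> gen (Alt r1 r2) p w
| gen_cat r1 r2 p w1 w2 :
    gen r1 (false :: p) w1 -> gen r2 (true :: p) w2 -> gen (Cat r1 r2) p (w1 ++ w2)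
| gen_star0 r p : gen (Star r) p []
| gen_stars r p w1 w2 :
    gen r (false :: p) w1 -> gen (Star r) p w2 -> gen (Star r) p (w1 ++ w2).

Definition first A (R : re A) (v : addr) (x : addr) : Prop :=
  exists r w, subat R v = Some r /\ gen r v (x :: w).
Definition last A (R : re A) (v : addr) (x : addr) : Prop :=
  exists r w, subat R v = Some r /\ gen r v (w ++ [x]).

Definition subset_pos (X Y : addr -> Prop) : Prop := forall x, X x -> Y x.

Definition in_lastextent A (R : re A) (P : addr -> Prop) (v : addr) : Prop :=
  exists p, P p /\ last R v p.
Definition in_firstextent_Pos A (R : re A) (a : A) (v : addr) : Prop :=
  exists q, is_pos_of R a q /\ first R v q.

Definition anc (u v : addr) : Prop := exists w, v = w ++ u.
Definition proper_anc (u v : addr) : Prop := anc u v /\ u <> v.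

Definition inN A (R : re A) (P : addr -> Prop) (a : A) (v : addr) : Prop :=
  is_cat R v /\ in_lastextent R P (left v) /\ in_firstextent_Pos R a (right v).

Definition dominated A (R : re A) (v u : addr) : Prop :=
  is_cat R u /\ proper_anc u v /\ subset_pos (first R (right v)) (first R (right u)).

Definition inNtilde A (R : re A) (P : addr -> Prop) (a : A) (v : addr) : Prop :=
  inN R P a v /\ ~ (exists u, inN R P a u /\ dominated R v u).

Definition inT (P : addr -> Prop) (t : addr) : Prop := exists p, P p /\ anc t p.
Definition branching (P : addr -> Prop) (t : addr) : Prop :=
  inT P (left t) /\ inT P (right t).
Definition leafT (P : addr -> Prop) (t : addr) : Prop :=
  inT P t /\ ~ inT P (left t) /\ ~ inT P (right t).

Definition segment (P : addr -> Prop) (tp bt : addr) : Prop :=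
  (leafT P bt \/ branching P bt) /\ proper_anc tp bt /\
  (branching P tp \/ tp = []) /\
  (forall x, proper_anc tp x -> proper_anc x bt -> ~ branching P x).

Definition on_segment (tp bt v : addr) : Prop := anc tp v /\ anc v bt.

Definition live A (R : re A) (P : addr -> Prop) (v : addr) : Prop :=
  is_cat R v /\ in_lastextent R P (left v).

Definition weakly_dominated A (R : re A) (P : addr -> Prop) (t u : addr) : Prop :=
  live R P u /\ proper_anc u t /\ subset_pos (first R t) (first R (right u)).

(* Main.v *)
Require Import Defs.
From Stdlib Require Import List Lia Bool.
Import ListNotations.

Lemma subat_app A (R : re A) c n :
  subat R (c ++ n) = match subat R n with Some r => subat r c | None => None end.
Proof.
  induction c as [|b c IH]; simpl.
  - destruct (subat R n); reflexivity.
  - rewrite IH. destruct (subat R n); reflexivity.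
Qed.

Lemma anc_trans a b c : anc a b -> anc b c -> anc a c.
Proof. intros [w1 H1] [w2 H2]. exists (w2 ++ w1). subst. apply app_assoc. Qed.

Lemma anc_cons b v : anc v (b :: v).
Proof. exists [b]. reflexivity. Qed.

Lemma gen_under A (r : re A) n l : gen r n l -> forall x, In x l -> anc n x.
Proof.
  induction 1; intros x Hx; simpl in *.
  - contradiction.
  - destruct Hx as [<-|[]]. exists []. reflexivity.
  - eapply anc_trans; [apply anc_cons|]. eauto.
  - eapply anc_trans; [apply anc_cons|]. eauto.
  - apply in_app_or in Hx. destruct Hx.
    + eapply anc_trans; [apply anc_cons|]. eauto.
    + eapply anc_trans; [apply anc_cons|]. eauto.
  - contradiction.
  - apply in_app_or in Hx. destruct Hx.
    + eapply anc_trans; [apply anc_cons|]. eauto.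
    + eauto.
Qed.

Arguments gen_under {A r n l}.

Lemma bit_eq (e e' : list bool) b b' p : e ++ b :: p = e' ++ b' :: p -> b = b'.
Proof.
  intro H. change (b :: p) with ([b] ++ p) in H. change (b' :: p) with ([b'] ++ p) in H.
  rewrite !app_assoc in H. apply app_inv_tail in H. apply app_inj_tail in H. tauto.
Qed.

Lemma key A (r : re A) n l : gen r n l -> forall x w c e, l = x :: w -> x = e ++ c ++ n ->
  exists r', subat r c = Some r' /\ (exists w1, gen r' (c ++ n) (x :: w1)) /\
  (forall y w', gen r' (c ++ n) (y :: w') -> exists w'', gen r n (y :: w'')).
Proof.
  intro H. assert (H0 := H). revert H0.
  induction H as [p|a p|r1 r2 p l H IH|r1 r2 p l H IH|r1 r2 p l1 l2 H1 IH1 H2 IH2|r p|r p l1 l2 H1 IH1 H2 IH2];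
  intros H0 x w c e Hl Hx; try discriminate;
  (destruct c as [|b c0 _] using rev_ind;
   [ eexists; split; [reflexivity|]; split;
     [ exists w; simpl; rewrite <- Hl; exact H0 | intros y w' Hg; exists w'; exact Hg ] |]);
  (assert (Hx' : x = (e ++ c0) ++ b :: p) by (rewrite Hx; repeat rewrite <- app_assoc; reflexivity));
  rewrite subat_app; simpl; replace ((c0 ++ [b]) ++ p) with (c0 ++ b :: p)
    by (rewrite <- app_assoc; reflexivity).
  -
    injection Hl as <- _. exfalso.
    apply (f_equal (@length bool)) in Hx'. rewrite !length_app in Hx'. simpl in Hx'. lia.
  - subst l. destruct (gen_under H x (or_introl eq_refl)) as [e2 He2].
    assert (b = false) by (rewrite Hx' in He2; exact (bit_eq _ _ _ _ _ He2)). subst b.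
    destruct (IH H x w c0 e eq_refl ltac:(rewrite Hx'; rewrite <- app_assoc; reflexivity))
      as [r' [Hr [Hw Hrep]]].
    exists r'. split; [exact Hr|]. split; [exact Hw|].
    intros y w' Hg. destruct (Hrep y w' Hg) as [w'' Hw'']. exists w''. constructor. exact Hw''.
  - subst l. destruct (gen_under H x (or_introl eq_refl)) as [e2 He2].
    assert (b = true) by (rewrite Hx' in He2; exact (bit_eq _ _ _ _ _ He2)). subst b.
    destruct (IH H x w c0 e eq_refl ltac:(rewrite Hx'; rewrite <- app_assoc; reflexivity))
      as [r' [Hr [Hw Hrep]]].
    exists r'. split; [exact Hr|]. split; [exact Hw|].
    intros y w' Hg. destruct (Hrep y w' Hg) as [w'' Hw'']. exists w''. apply gen_altr. exact Hw''.
  - destruct l1 as [|x1 l1'].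
    + simpl in Hl. subst l2. destruct (gen_under H2 x (or_introl eq_refl)) as [e2 He2].
      assert (b = true) by (rewrite Hx' in He2; exact (bit_eq _ _ _ _ _ He2)). subst b.
      destruct (IH2 H2 x w c0 e eq_refl ltac:(rewrite Hx'; rewrite <- app_assoc; reflexivity))
        as [r' [Hr [Hw Hrep]]].
      exists r'. split; [exact Hr|]. split; [exact Hw|].
      intros y w' Hg. destruct (Hrep y w' Hg) as [w'' Hw''].
      exists w''. change (y :: w'') with ([] ++ y :: w''). constructor; assumption.
    + simpl in Hl. injection Hl as -> Hl.
      destruct (gen_under H1 x (or_introl eq_refl)) as [e2 He2].
      assert (b = false) by (rewrite Hx' in He2; exact (bit_eq _ _ _ _ _ He2)). subst b.
      destruct (IH1 H1 x l1' c0 e eq_refl ltac:(rewrite Hx'; rewrite <- app_assoc; reflexivity))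
        as [r' [Hr [Hw Hrep]]].
      exists r'. split; [exact Hr|]. split; [exact Hw|].
      intros y w' Hg. destruct (Hrep y w' Hg) as [w'' Hw''].
      exists (w'' ++ l2). change (y :: w'' ++ l2) with ((y :: w'') ++ l2). constructor; assumption.
  - destruct l1 as [|x1 l1'].
    + simpl in Hl. subst l2.
      destruct (IH2 H2 x w (c0 ++ [b]) e eq_refl Hx) as [r' [Hr [Hw Hrep]]].
      rewrite subat_app in Hr. simpl in Hr.
      replace ((c0 ++ [b]) ++ p) with (c0 ++ b :: p) in Hw, Hrep
        by (rewrite <- app_assoc; reflexivity).
      exists r'. split; [exact Hr|]. split; [exact Hw|].
      intros y w' Hg. destruct (Hrep y w' Hg) as [w'' Hw''].
      exists w''. change (y :: w'') with ([] ++ y :: w''). constructor; assumption.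
    + simpl in Hl. injection Hl as -> Hl.
      destruct (gen_under H1 x (or_introl eq_refl)) as [e2 He2].
      assert (b = false) by (rewrite Hx' in He2; exact (bit_eq _ _ _ _ _ He2)). subst b.
      destruct (IH1 H1 x l1' c0 e eq_refl ltac:(rewrite Hx'; rewrite <- app_assoc; reflexivity))
        as [r' [Hr [Hw Hrep]]].
      exists r'. split; [exact Hr|]. split; [exact Hw|].
      intros y w' Hg. destruct (Hrep y w' Hg) as [w'' Hw''].
      exists (w'' ++ l2). change (y :: w'' ++ l2) with ((y :: w'') ++ l2). constructor; assumption.
Qed.
Arguments key {A r n l}.

Lemma key_first A (R : re A) n c x : first R n x -> anc (c ++ n) x ->
  first R (c ++ n) x /\ subset_pos (first R (c ++ n)) (first R n).
Proof.
  intros [r [w [Hs Hg]]] [e He].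
  destruct (key Hg x w c e eq_refl He) as [r' [Hr' [[w1 Hg1] Hrep]]].
  assert (Hsc : subat R (c ++ n) = Some r') by (rewrite subat_app, Hs; exact Hr').
  split.
  - exists r', w1. split; assumption.
  - intros y [r'' [w' [Hs'' Hg']]]. rewrite Hsc in Hs''. injection Hs'' as <-.
    destruct (Hrep y w' Hg') as [w'' Hw'']. exists r, w''. split; assumption.
Qed.

Lemma first_under A (R : re A) n x : Defs.first R n x -> anc n x.
Proof. intros [r [w [_ Hg]]]. exact (gen_under Hg x (or_introl eq_refl)). Qed.

Arguments first_under {A R n x}.

Lemma last_under A (R : re A) n x : Defs.last R n x -> anc n x.
Proof. intros [r [w [_ Hg]]]. apply (gen_under Hg x). apply in_or_app. right. left. reflexivity. Qed.

Lemma inT_anc P s t : inT P t -> anc s t -> inT P s.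
Proof. intros [p [Hp Ha]] Hs. exists p. split; [exact Hp|]. eapply anc_trans; eauto. Qed.

Lemma inT_last A (R : re A) P n : in_lastextent R P n -> inT P n.
Proof. intros [p [Hp Hl]]. exists p. split; [exact Hp|]. eapply last_under; eauto. Qed.
Arguments key_first {A R n c x}.

Theorem lemma7 (A : Type) (R : re A) (P : addr -> Prop) (a : A)
  (tp bt v : addr)
  (HP : forall p, P p -> is_pos R p)
  (Hseg : segment P tp bt)
  (HvN : inN R P a v)
  (Hon : on_segment tp bt v)
  (Hvt : v <> tp) (Hvb : v <> bt) :
  on_segment tp bt (left v) /\
  (~ dominated R v tp ->
   ~ (subset_pos (first R (right v)) (first R tp) /\
      exists u, inT P u /\ live R P u /\ weakly_dominated R P tp u) ->
   inNtilde R P a v).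
Proof.
  destruct Hseg as [Hbt [Hptb [Htop Hnb]]].
  destruct Hon as [[wt Hwt] [wb Hwb]].
  destruct HvN as [Hcat [Hle Hfe]].
  assert (HinTl : inT P (left v)) by (eapply inT_last; eauto).
  assert (HinTv : inT P v) by (eapply inT_anc; [exact HinTl| apply anc_cons]).
  assert (HinTbt : inT P bt).
  { destruct Hbt as [[H _]|[H _]]; [exact H|]. eapply inT_anc; [exact H| apply anc_cons]. }
  assert (Hpv : proper_anc tp v) by (split; [exists wt; exact Hwt| congruence]).
  split.
  { split.
    - exists (false :: wt). unfold left. rewrite Hwt. reflexivity.
    - destruct wb as [|b wb0 _] using rev_ind.
      + exfalso. apply Hvb. rewrite Hwb. reflexivity.
      + destruct b.
        * exfalso. apply (Hnb v Hpv).
          -- split; [exists (wb0 ++ [true]); exact Hwb| congruence].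
          -- split; [exact HinTl|]. eapply inT_anc; [exact HinTbt|].
             exists wb0. rewrite Hwb, <- app_assoc. reflexivity.
        * exists wb0. rewrite Hwb, <- app_assoc. reflexivity. }
  intros Hnd Hnb2. split; [split; [exact Hcat| split; assumption]|].
  intros [u [[Hcu [Hleu Hfeu]] [Hcu' [[[[|b w0] Hw] Hne] Hsub]]]].
  { apply Hne. symmetry. exact Hw. }
  destruct (@exists_last _ (b :: w0) ltac:(discriminate)) as [w1 [b1 Hb1]].
  rewrite Hb1 in Hw. clear b w0 Hb1.
  destruct Hfe as [q [Hq Hfq]].
  assert (Hfqu := Hsub q Hfq).
  destruct (first_under Hfq) as [e1 He1].
  destruct (first_under Hfqu) as [e2 He2].
  assert (b1 = true).
  { unfold right in He1, He2. rewrite Hw in He1.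
    assert (He : (e1 ++ true :: w1) ++ b1 :: u = e2 ++ true :: u)
      by (rewrite <- He2, He1; rewrite <- !app_assoc; reflexivity).
    exact (bit_eq _ _ _ _ _ He). }
  subst b1.
  destruct (list_eq_dec bool_dec u tp) as [<-|Hut].
  { apply Hnd. split; [exact Hcu|]. split; [|exact Hsub]. split; [exists (w1 ++ [true]); exact Hw| exact Hne]. }
  assert (Happ : wt ++ tp = (w1 ++ [true]) ++ u) by (rewrite <- Hwt; exact Hw).
  destruct (app_eq_app _ _ _ _ Happ) as [l [[Hl1 Hl2]|[Hl1 Hl2]]].
  - (* u below tp *)
    exfalso. apply (Hnb u).
    + split; [exists l; exact Hl2| congruence].
    + split.
      * exists (wb ++ w1 ++ [true]). rewrite Hwb, Hw, !app_assoc. reflexivity.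
      * intro Heq. rewrite Hwb, Hw in Heq.
        apply (f_equal (@length bool)) in Heq. rewrite !length_app in Heq. simpl in Heq. lia.
    + split.
      * eapply inT_last; eauto.
      * eapply inT_anc; [exact HinTv|]. exists w1. rewrite Hw, <- app_assoc. reflexivity.
  - (* tp below u *)
    destruct l as [|c0 l0].
    { exfalso. apply Hut. symmetry. exact Hl2. }
    destruct (@exists_last _ (c0 :: l0) ltac:(discriminate)) as [l1 [c1 Hc1]].
    rewrite Hc1 in Hl1, Hl2. clear c0 l0 Hc1.
    rewrite app_assoc in Hl1. apply app_inj_tail in Hl1. destruct Hl1 as [_ <-].
    assert (Htp : tp = l1 ++ right u) by (rewrite Hl2, <- app_assoc; reflexivity).
    assert (Hanc : forall x, first R (right v) x -> anc (l1 ++ right u) x).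
    { intros x Hx. rewrite <- Htp. eapply anc_trans; [exists wt; exact Hwt|].
      eapply anc_trans; [apply anc_cons|]. exact (first_under Hx). }
    apply Hnb2. split.
    + intros x Hx. rewrite Htp. exact (proj1 (key_first (Hsub x Hx) (Hanc x Hx))).
    + exists u. split; [eapply inT_anc; [eapply inT_last; exact Hleu| apply anc_cons]|].
      split; [split; assumption|].
      split; [split; assumption|]. split.
      * split; [exists (l1 ++ [true]); exact Hl2| congruence].
      * rewrite Htp. exact (proj2 (key_first Hfqu (Hanc q Hfq))).
Qed.
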